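(* For all integers $r\ge0$ and $\nu\ge0$, $$E^{(2r+1)}_{2\nu}=\frac{1}{(2r)!}\sum_{\rho=0}^{r}(-1)^\rho\,\mathcal G^r_\rho\,E_{2\nu+2\rho}.$$
   Context: Generalised Euler numbers $E^{(m)}_{2\nu}$ are defined by $\operatorname{sech}^m x=\sum_{\nu\ge0}E^{(m)}_{2\nu}\,x^{2\nu}/(2\nu)!$, and $E_{2\nu}=E^{(1)}_{2\nu}$ are the Euler numbers. The integers $\mathcal G^r_\rho$ ($0\le\rho\le r$) are defined by $\mathcal G^0_0=1$, $\mathcal G^r_{-1}=\mathcal G^r_{r+1}=0$, and $\mathcal G^r_\rho=(2r-1)^2\mathcal G^{r-1}_\rho+\mathcal G^{r-1}_{\rho-1}$ for $r\ge1$. *)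

(* Defs.v *)
From HB Require Import structures.
From mathcomp Require Import all_boot all_order all_algebra.
Set Implicit Arguments. Unset Strict Implicit. Unset Printing Implicit Defensive.
Import Order.TTheory GRing.Theory Num.Theory.
Local Open Scope ring_scope.

(* A formal power series is given by its coefficient sequence: a n = [x^n] a. *)
Definition ps := nat -> rat.

Definition ps_one : ps := fun n => if n == 0%N then 1 else 0.

Definition ps_mul (a b : ps) : ps :=
  fun n => \sum_(k < n.+1) a k * b (n - k)%N.

Definition ps_exp (a : ps) (m : nat) : ps := iter m (ps_mul a) ps_one.

(* list of the first n+1 coefficients of the multiplicative inverse of a
   (a 0 assumed nonzero): b 0 = (a 0)^-1,
   b n = -(a 0)^-1 * sum_{k=1}^{n} a k * b (n-k). *)
Fixpoint ps_inv_upto (a : ps) (n : nat) : seq rat :=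
  match n with
  | 0%N => [:: (a 0%N)^-1]
  | n'.+1 =>
      let s := ps_inv_upto a n' in
      rcons s (- (a 0%N)^-1 * \sum_(1 <= k < n'.+2) a k * nth 0 s (n'.+1 - k)%N)
  end.

Definition ps_inv (a : ps) : ps := fun n => nth 0 (ps_inv_upto a n) n.

Definition cosh_ps : ps := fun n => if odd n then 0 else (n`!%:R)^-1.

Definition sech_ps : ps := ps_inv cosh_ps.

(* Generalised Euler numbers: sech^m x = sum_k E^(m)_k x^k / k!,
   so E^(m)_k = k! [x^k] sech^m x. (Used with k = 2 nu.) *)
Definition gen_euler (m k : nat) : rat := k`!%:R * ps_exp sech_ps m k.

Definition euler (k : nat) : rat := gen_euler 1 k.

(* The integers G^r_rho: G^0_0 = 1, G^r_{-1} = G^r_{r+1} = 0,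
   G^r_rho = (2r-1)^2 G^{r-1}_rho + G^{r-1}_{rho-1}  (r >= 1). *)
Fixpoint G (r rho : nat) : nat :=
  match r with
  | 0%N => (rho == 0%N)
  | r'.+1 => ((2 * r' + 1) ^ 2 * G r' rho
              + (if rho is rho'.+1 then G r' rho' else 0))%N
  end.

(* Main.v *)
Require Import Defs.
From HB Require Import structures.
From mathcomp Require Import all_boot all_order all_algebra.
From mathcomp Require Import boolp.
From mathcomp Require Import ring zify.
From Stdlib Require Import FunctionalExtensionality.
Import Order.TTheory GRing.Theory Num.Theory.
Set Implicit Arguments. Unset Strict Implicit.
Local Open Scope ring_scope.

Definition psr := ps.
HB.instance Definition _ := gen_eqMixin psr.
HB.instance Definition _ := gen_choiceMixin psr.

Definition ps_add (a b : psr) : psr := fun n => a n + b n.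
Definition ps_opp (a : psr) : psr := fun n => - a n.
Definition ps_zero : psr := fun _ => 0.

Lemma ps_addA : associative ps_add.
Proof. move=> a b c; apply: functional_extensionality => n; exact: addrA. Qed.
Lemma ps_addC : commutative ps_add.
Proof. move=> a b; apply: functional_extensionality => n; exact: addrC. Qed.
Lemma ps_add0 : left_id ps_zero ps_add.
Proof. move=> a; apply: functional_extensionality => n; exact: add0r. Qed.
Lemma ps_addN : left_inverse ps_zero ps_opp ps_add.
Proof. move=> a; apply: functional_extensionality => n; exact: addNr. Qed.

HB.instance Definition _ := GRing.isZmodule.Build psr ps_addA ps_addC ps_add0 ps_addN.

Definition T (N : nat) (a : ps) : {poly rat} := \poly_(i < N) a i.

Lemma coefM_eq (p p' q q' : {poly rat}) k :
  (forall i, (i <= k)%N -> p`_i = p'`_i) -> (forall i, (i <= k)%N -> q`_i = q'`_i) ->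
  (p * q)`_k = (p' * q')`_k.
Proof.
move=> hp hq; rewrite !coefM; apply: eq_bigr => i _.
rewrite hp ?hq //; [exact: leq_subr | by rewrite -ltnS].
Qed.

Lemma mul_T (a b : ps) k N : (k < N)%N -> ps_mul a b k = (T N a * T N b)`_k.
Proof.
move=> kN; rewrite coefM /ps_mul; apply: eq_bigr => i _.
rewrite !coef_poly; have ik : (i <= k)%N by rewrite -ltnS.
rewrite (leq_ltn_trans ik kN) (leq_ltn_trans (leq_subr i k) kN) //.
Qed.

Lemma T_mul (a b : ps) k N : (k < N)%N -> (T N (ps_mul a b))`_k = (T N a * T N b)`_k.
Proof. move=> kN; rewrite coef_poly kN; exact: mul_T. Qed.

Lemma ps_mulA : associative ps_mul.
Proof.
move=> a b c; apply: functional_extensionality => k.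
have h1 := mul_T (ps_mul a b) c (ltnSn k).
have h2 := mul_T a (ps_mul b c) (ltnSn k).
rewrite h1 h2.
have e1 : (T k.+1 (ps_mul a b) * T k.+1 c)`_k = (T k.+1 a * T k.+1 b * T k.+1 c)`_k.
  by apply: coefM_eq => // i ik; rewrite T_mul // ltnS.
have e2 : (T k.+1 a * T k.+1 (ps_mul b c))`_k = (T k.+1 a * (T k.+1 b * T k.+1 c))`_k.
  by apply: coefM_eq => // i ik; rewrite T_mul // ltnS.
by rewrite e1 e2 mulrA.
Qed.

Lemma ps_mulC : commutative ps_mul.
Proof.
move=> a b; apply: functional_extensionality => k.
by rewrite (mul_T _ _ (ltnSn k)) (mul_T b _ (ltnSn k)) mulrC.
Qed.

Lemma ps_mul1 : left_id ps_one ps_mul.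
Proof.
move=> a; apply: functional_extensionality => k.
rewrite /ps_mul big_ord_recl /= /ps_one /= mul1r subn0 big1 ?addr0 // => i _.
by rewrite mul0r.
Qed.

Lemma ps_mulDl : left_distributive ps_mul ps_add.
Proof.
move=> a b c; apply: functional_extensionality => k.
by rewrite /ps_mul /ps_add -big_split; apply: eq_bigr => i _; rewrite mulrDl.
Qed.

Lemma ps_one_neq0 : ps_one != (0 : psr).
Proof.
apply/negP => /eqP h; have := congr1 (fun f => f 0%N) h.
rewrite /ps_one /=. move=> h1; have : (1 : rat) = 0 by exact: h1.
by move/eqP; rewrite oner_eq0.
Qed.

HB.instance Definition _ := GRing.Zmodule_isComNzRing.Build psr
  ps_mulA ps_mulC ps_mul1 ps_mulDl ps_one_neq0.

Lemma addE (a b : psr) k : (a + b) k = a k + b k. Proof. by []. Qed.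
Lemma oppE (a : psr) k : (- a) k = - a k. Proof. by []. Qed.
Lemma subE (a b : psr) k : (a - b) k = a k - b k. Proof. by []. Qed.
Lemma mulE (a b : psr) k : (a * b) k = ps_mul a b k. Proof. by []. Qed.
Lemma oneE k : (1 : psr) k = ps_one k. Proof. by []. Qed.
Lemma zeroE k : (0 : psr) k = 0. Proof. by []. Qed.
Lemma natmulE (a : psr) c k : (a *+ c) k = a k *+ c.
Proof. elim: c => [|c IH]; first by rewrite !mulr0n. by rewrite !mulrS addE IH. Qed.
Lemma natE (a : psr) c k : ((c%:R : psr) * a) k = c%:R * a k.
Proof. by rewrite mulr_natl natmulE mulr_natl. Qed.

Lemma exp_ps (a : psr) m : ps_exp a m = a ^+ m.
Proof. elim: m => [|m IH] //. by rewrite exprS -IH /ps_exp iterS. Qed.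

Definition D (a : psr) : psr := fun n => (n.+1)%:R * a n.+1.

Lemma D_add (a b : psr) : D (a + b) = D a + D b.
Proof. apply: functional_extensionality => k; by rewrite /D !addE mulrDr. Qed.
Lemma D_opp (a : psr) : D (- a) = - D a.
Proof. apply: functional_extensionality => k; by rewrite /D !oppE mulrN. Qed.

Lemma D_mul (a b : psr) : D (a * b) = D a * b + a * D b.
Proof.
apply: functional_extensionality => k.
rewrite /D addE !mulE (mul_T _ _ (ltnSn k.+1)).
rewrite (mul_T (D a) _ (ltnW (ltnSn k.+1))) (mul_T a (D b) (ltnW (ltnSn k.+1))).

have -> : (k.+1)%:R * (T k.+2 a * T k.+2 b)`_k.+1 = ((T k.+2 a * T k.+2 b)^`())`_k.
  by rewrite coef_deriv mulr_natl.
rewrite derivM coefD; congr (_ + _); apply: coefM_eq => // i ik;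
  rewrite coef_deriv !coef_poly /D;
  (have iK : (i < k.+2)%N by lia); (have iK1 : (i.+1 < k.+2)%N by lia);
  by rewrite iK iK1 mulr_natl.
Qed.

Lemma D_one : D 1 = 0.
Proof. apply: functional_extensionality => k; by rewrite /D oneE /ps_one /= mulr0. Qed.

Lemma D_nat c : D (c%:R) = 0.
Proof. elim: c => [|c IH]; first by rewrite /D; apply: functional_extensionality => k; rewrite mulr0. 
by rewrite -addn1 natrD D_add IH D_one addr0. Qed.

Lemma D_natmul c (a : psr) : D (c%:R * a) = c%:R * D a.
Proof. by rewrite D_mul D_nat mul0r add0r. Qed.

Lemma D_exp (a : psr) m : D (a ^+ m.+1) = m.+1%:R * a ^+ m * D a.
Proof.
elim: m => [|m IH]; first by rewrite expr1 expr0 mulr1 mul1r.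
rewrite exprS D_mul IH !exprS; ring.
Qed.

Lemma D_zero_one (f : psr) : D f = 0 -> f 0%N = 1 -> f = 1.
Proof.
move=> hD h0; apply: functional_extensionality => k; case: k => [|k] //.
rewrite oneE /ps_one /=.
have := congr1 (fun g => g k) hD; rewrite /D zeroE => /eqP.
by rewrite mulf_eq0 pnatr_eq0 /= => /eqP.
Qed.

Lemma size_inv_upto a n : size (ps_inv_upto a n) = n.+1.
Proof. elim: n => [|n IH] //=; by rewrite size_rcons IH. Qed.

Lemma nth_inv_upto a n i : (i <= n)%N -> nth 0 (ps_inv_upto a n) i = ps_inv a i.
Proof.
elim: n i => [|n IH] i.
  by rewrite leqn0 => /eqP ->.
rewrite leq_eqVlt => /orP [/eqP -> // | lt].
by rewrite /= nth_rcons size_inv_upto lt IH // -ltnS.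
Qed.

Lemma ps_inv_S a n : ps_inv a n.+1 =
  - (a 0%N)^-1 * \sum_(1 <= k < n.+2) a k * ps_inv a (n.+1 - k)%N.
Proof.
rewrite {1}/ps_inv /= nth_rcons size_inv_upto ltnn eqxx; congr (_ * _).
apply: eq_big_nat => k /andP [k1 kn]; rewrite nth_inv_upto //; lia.
Qed.

Lemma ps_mul_inv a : a 0%N != 0 -> ps_mul a (ps_inv a) = ps_one.
Proof.
move=> a0; apply: functional_extensionality => k; case: k => [|n].
  by rewrite /ps_mul big_ord1 /ps_inv /= mulfV.
rewrite /ps_mul big_ord_recl subn0 ps_inv_S big_add1 /= big_mkord.
rewrite mulrA mulrN mulfV // mulN1r.
have -> : \sum_(i < n.+1) a (bump 0 i) * ps_inv a (n.+1 - bump 0 i)%N =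
          \sum_(i < n.+1) a i.+1 * ps_inv a (n.+1 - i.+1)%N by [].
by rewrite addNr.
Qed.

Definition C : psr := cosh_ps.
Definition Sh : psr := fun n => if odd n then (n`!%:R)^-1 else 0.
Definition S : psr := sech_ps.

Lemma fact_inv k : (k.+1)%:R * ((k.+1)`!%:R)^-1 = (k`!%:R)^-1 :> rat.
Proof.
rewrite factS natrM invfM mulrA mulfV ?mul1r //.
by rewrite pnatr_eq0.
Qed.

Lemma DC : D C = Sh.
Proof.
apply: functional_extensionality => k; rewrite /D /C /Sh /cosh_ps /=.
by case: (odd k) => /=; rewrite ?mulr0 ?fact_inv.
Qed.

Lemma DSh : D Sh = C.
Proof.
apply: functional_extensionality => k; rewrite /D /C /Sh /cosh_ps /=.
by case: (odd k) => /=; rewrite ?mulr0 ?fact_inv.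
Qed.

Lemma CSh : C * C - Sh * Sh = 1.
Proof.
apply: D_zero_one.
  by rewrite D_add D_opp !D_mul DC DSh; ring.
rewrite subE !mulE /ps_mul !big_ord1 /C /Sh /cosh_ps /=.
rewrite subnn fact0 mulr1n; field. all: by [].
Qed.

Lemma SC : S * C = 1.
Proof.
rewrite mulrC; apply: ps_mul_inv.
by rewrite /cosh_ps.
Qed.

Lemma DS : D S = - (S * S * Sh).
Proof.
have h : D S * C + S * Sh = 0.
  by rewrite -DC -D_mul SC D_one.
have -> : D S = S * (D S * C + S * Sh) - S * S * Sh.
  rewrite mulrDr; have -> : S * (D S * C) = D S * (S * C) by ring.
  rewrite SC; ring.
by rewrite h; ring.
Qed.

Lemma DDS n :
  D (D (S ^+ n.+1)) = (n.+1 * n.+1)%:R * S ^+ n.+1 - (n.+1 * n.+2)%:R * S ^+ n.+3.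
Proof.
have hsh : Sh * Sh = C * C - 1 by rewrite -CSh; ring.
have e1 : D (S ^+ n.+1) = - ((n.+1)%:R * (S ^+ n.+2 * Sh)).
  rewrite D_exp DS !exprS; ring.
rewrite e1 D_opp D_natmul D_mul D_exp DS DSh.
have -> : S ^+ n.+3 = S ^+ n.+1 * S * S by rewrite !exprS; ring.
have -> : S ^+ n.+2 = S ^+ n.+1 * S by rewrite !exprS; ring.
have -> : S ^+ n.+1 = S ^+ n * S by rewrite !exprS; ring.
set X := S ^+ n.
have -> : - ((n.+1)%:R * ((n.+2)%:R * (X * S) * - (S * S * Sh) * Sh + X * S * S * C))
  = (n.+1)%:R * ((n.+2)%:R * (X * S * S * S) * (Sh * Sh) - X * S * (S * C)) by ring.
rewrite hsh SC.
have e : X * S * S * S * (C * C) = X * S * (S * C) * (S * C) by ring.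
transitivity ((n.+1)%:R * ((n.+2)%:R * (X * S * S * S * (C * C) - X * S * S * S) - X * S)).
  ring.
rewrite e SC !natrM; ring.
Qed.

Lemma gen_rec m k : gen_euler m.+1 k.+2 =
  (m.+1 * m.+1)%:R * gen_euler m.+1 k - (m.+1 * m.+2)%:R * gen_euler m.+3 k.
Proof.
rewrite /gen_euler.
have hS : forall j, ps_exp sech_ps j = S ^+ j by move=> j; rewrite -exp_ps.
rewrite !hS.
have h := congr1 (fun f : psr => f k) (DDS m).
move: h; rewrite /= subE !natE /D => h.
rewrite !factS !natrM.
transitivity (k`!%:R * (k.+1%:R * (k.+2%:R * (S ^+ m.+1) k.+2))); first ring.
rewrite h; ring.
Qed.

Lemma G_big r rho : (r < rho)%N -> G r rho = 0%N.
Proof.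
elim: r rho => [|r IH] [|rho] //= lt.
rewrite IH 1?IH //; lia.
Qed.

Definition Sig (r nu : nat) : rat :=
  \sum_(rho < r.+1) (-1) ^+ rho * (G r rho)%:R * euler (2 * nu + 2 * rho).

Lemma Sig_S r nu : Sig r.+1 nu =
  ((2 * r + 1) ^ 2)%:R * Sig r nu - Sig r nu.+1.
Proof.
rewrite /Sig.
have -> : \sum_(rho < r.+2) (-1) ^+ rho * (G r.+1 rho)%:R * euler (2 * nu + 2 * rho)
  = \sum_(rho < r.+2) (((2 * r + 1) ^ 2)%:R *
        ((-1) ^+ rho * (G r rho)%:R * euler (2 * nu + 2 * rho)) +
      (-1) ^+ rho * (match nat_of_ord rho with 0 => 0 | rho'.+1 => G r rho' end)%:R
         * euler (2 * nu + 2 * rho)).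
  apply: eq_bigr => i _; rewrite /= natrD natrM; ring.
rewrite big_split /= big_ord_recr /= G_big // mulr0 mul0r mulr0 addr0.
rewrite mulr_sumr; congr (_ + _).
rewrite big_ord_recl /= mulr0 mul0r add0r -sumrN.
apply: eq_bigr => i _; rewrite exprS.
have -> : (2 * nu + 2 * (bump 0 i))%N = (2 * nu.+1 + 2 * i)%N.
  rewrite /bump /=; lia.
ring.
Qed.

Lemma main_aux r nu : ((2 * r)`!%:R) * gen_euler (2 * r + 1) (2 * nu) = Sig r nu.
Proof.
elim: r nu => [|r IH] nu.
  rewrite /Sig big_ord1 /= mul1r expr0 mul1r muln0 addn0.
  by rewrite mul1r /euler.
have e1 : (2 * r.+1 + 1 = (2 * r).+3)%N by lia.
have e2 : (2 * r + 1 = (2 * r).+1)%N by lia.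
have e3 : (2 * r.+1 = (2 * r).+2)%N by lia.
have hr := gen_rec (2 * r) (2 * nu).
rewrite Sig_S -!IH e1 e3.
have e4 : (2 * nu.+1 = (2 * nu).+2)%N by lia.
rewrite e4 e2 hr.
rewrite !factS !natrM.
set a := gen_euler (2 * r).+1 (2 * nu).
set b := gen_euler (2 * r).+3 (2 * nu).
have -> : ((2 * r).+1)%:R = (2 * r)%:R + 1 :> rat by rewrite -addn1 natrD.
have -> : ((2 * r).+2)%:R = (2 * r)%:R + 2%:R :> rat by rewrite -addn2 natrD.
ring.
Qed.

Unset Implicit Arguments. Set Strict Implicit.
Theorem mainTheorem4 (r nu : nat) :
  gen_euler (2 * r + 1) (2 * nu) =
  ((2 * r)`!%:R)^-1 *
    \sum_(rho < r.+1) (-1) ^+ rho * (G r rho)%:R * euler (2 * nu + 2 * rho).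
Proof.
rewrite -/(Sig r nu) -main_aux mulrA mulVf ?mul1r //.
by rewrite pnatr_eq0 -lt0n fact_gt0.
Qed.
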